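(* Let $\psi:\mathbb{H}\to\mathbb{H}$ be a linear isometry. The pair $(\varphi,\psi)=(\sigma_{\mathbb{H}},\psi)$ satisfies (i) $\varphi(\varphi(x)x)=\varphi(x)x$ for all $x$, (ii) $\varphi(\bar x\psi(x))=\bar x\psi(x)$ for all $x$, (iii) $\psi(\psi(y)\bar x+y\varphi(x))=\psi(y)\bar x+y\varphi(x)$ for all $x,y$, if and only if $\psi=\pm I_{\mathbb{H}}$.
   Context: $\sigma_{\mathbb{H}}(x)=\bar x$ is quaternion conjugation on $\mathbb{H}$; $I_{\mathbb{H}}$ is the identity. *)

(* Defs.v *)
From mathcomp Require Import all_boot all_order all_algebra.
From mathcomp Require Import reals.
Set Implicit Arguments. Unset Strict Implicit. Unset Printing Implicit Defensive.
Import Order.TTheory GRing.Theory Num.Theory.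
Local Open Scope ring_scope.

(* q = q0 + q1 i + q2 j + q3 k *)
Record quat (R : realType) := Quat { q0 : R; q1 : R; q2 : R; q3 : R }.

Section Quat.
Variable R : realType.
Implicit Types x y : quat R.

Definition qadd x y := Quat (q0 x + q0 y) (q1 x + q1 y) (q2 x + q2 y) (q3 x + q3 y).
Definition qopp x := Quat (- q0 x) (- q1 x) (- q2 x) (- q3 x).
Definition qscale (a : R) x := Quat (a * q0 x) (a * q1 x) (a * q2 x) (a * q3 x).

(* Hamilton product: i^2 = j^2 = k^2 = ijk = -1 *)
Definition qmul x y :=
  Quat (q0 x * q0 y - q1 x * q1 y - q2 x * q2 y - q3 x * q3 y)
       (q0 x * q1 y + q1 x * q0 y + q2 x * q3 y - q3 x * q2 y)
       (q0 x * q2 y - q1 x * q3 y + q2 x * q0 y + q3 x * q1 y)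
       (q0 x * q3 y + q1 x * q2 y - q2 x * q1 y + q3 x * q0 y).

Definition qconj x := Quat (q0 x) (- q1 x) (- q2 x) (- q3 x).

Definition qnorm x := Num.sqrt (q0 x ^+ 2 + q1 x ^+ 2 + q2 x ^+ 2 + q3 x ^+ 2).

Definition qlinear (f : quat R -> quat R) :=
  (forall x y, f (qadd x y) = qadd (f x) (f y)) /\
  (forall (a : R) x, f (qscale a x) = qscale a (f x)).

Definition qisometry (f : quat R -> quat R) := forall x, qnorm (f x) = qnorm x.
End Quat.

(* Main.v *)
Require Import Defs.
From mathcomp Require Import all_boot all_order all_algebra.
From mathcomp Require Import reals.
From mathcomp Require Import ring lra.
Import Order.TTheory GRing.Theory Num.Theory.
Local Open Scope ring_scope.

Lemma real_of (R : realType) (w : quat R) : qconj w = w ->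
  q1 w = 0 /\ q2 w = 0 /\ q3 w = 0.
Proof.
move=> H.
have h1 : q1 (qconj w) = q1 w by rewrite H.
have h2 : q2 (qconj w) = q2 w by rewrite H.
have h3 : q3 (qconj w) = q3 w by rewrite H.
move: h1 h2 h3 => /= h1 h2 h3. split; [lra|split; lra].
Qed.

Lemma quat_eq (R : realType) (a b : quat R) :
  q0 a = q0 b -> q1 a = q1 b -> q2 a = q2 b -> q3 a = q3 b -> a = b.
Proof. by case: a; case: b => /= ???? ???? -> -> -> ->. Qed.

Theorem lemma11 (R : realType) (psi : quat R -> quat R)
  (hlin : qlinear psi) (hiso : qisometry psi) :
  let phi := @qconj R in
  ((forall x, phi (qmul (phi x) x) = qmul (phi x) x) /\
   (forall x, phi (qmul (qconj x) (psi x)) = qmul (qconj x) (psi x)) /\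
   (forall x y, psi (qadd (qmul (psi y) (qconj x)) (qmul y (phi x)))
                = qadd (qmul (psi y) (qconj x)) (qmul y (phi x))))
  <-> ((forall x, psi x = x) \/ (forall x, psi x = qopp x)).
Proof.
case: hlin => hadd hsc.
have psi0 : psi (Quat 0 0 0 0) = Quat 0 0 0 0.
  have E : Quat (0:R) 0 0 0 = qscale 0 (Quat 0 0 0 0)
    by apply: quat_eq; rewrite /= mul0r.
  by rewrite {1}E hsc; apply: quat_eq; rewrite /= !mul0r.
move=> phi; split.
- case=> _ [hii _].
  pose e0 := Quat (1:R) 0 0 0. pose e1 := Quat (0:R) 1 0 0.
  pose e2 := Quat (0:R) 0 1 0. pose e3 := Quat (0:R) 0 0 1.
  have D : forall x, x = qadd (qadd (qadd (qscale (q0 x) e0) (qscale (q1 x) e1))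
                        (qscale (q2 x) e2)) (qscale (q3 x) e3).
    by case=> a b c d; apply: quat_eq; rewrite /= ; ring.
  have [a1 [a2 a3]] := real_of _ _ (hii e0).
  have [b1 [b2 b3]] := real_of _ _ (hii e1).
  have [c1 [c2 c3]] := real_of _ _ (hii e2).
  have [d1 [d2 d3]] := real_of _ _ (hii e3).
  have [f1 [f2 f3]] := real_of _ _ (hii (qadd e0 e1)).
  have [g1 [g2 g3]] := real_of _ _ (hii (qadd e0 e2)).
  have [h1 [h2 h3]] := real_of _ _ (hii (qadd e0 e3)).
  move: f1 f2 f3 g1 g2 g3 h1 h2 h3; rewrite !hadd.
  move: a1 a2 a3 b1 b2 b3 c1 c2 c3 d1 d2 d3 => /=.
  set A0 := q0 (psi e0); set A1 := q1 (psi e0); set A2 := q2 (psi e0); set A3 := q3 (psi e0).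
  set B0 := q0 (psi e1); set B1 := q1 (psi e1); set B2 := q2 (psi e1); set B3 := q3 (psi e1).
  set C0 := q0 (psi e2); set C1 := q1 (psi e2); set C2 := q2 (psi e2); set C3 := q3 (psi e2).
  set E0 := q0 (psi e3); set E1 := q1 (psi e3); set E2 := q2 (psi e3); set E3 := q3 (psi e3).
  move=> a1 a2 a3 b1 b2 b3 c1 c2 c3 d1 d2 d3 f1 f2 f3 g1 g2 g3 h1 h2 h3.
  have eA1 : A1 = 0 by lra. have eA2 : A2 = 0 by lra. have eA3 : A3 = 0 by lra.
  have eB0 : B0 = 0 by lra. have eB2 : B2 = 0 by lra. have eB3 : B3 = 0 by lra.
  have eC0 : C0 = 0 by lra. have eC1 : C1 = 0 by lra. have eC3 : C3 = 0 by lra.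
  have eE0 : E0 = 0 by lra. have eE1 : E1 = 0 by lra. have eE2 : E2 = 0 by lra.
  have eB1 : B1 = A0 by lra. have eC2 : C2 = A0 by lra. have eE3 : E3 = A0 by lra.
  have key : forall x, psi x = qscale A0 x.
    move=> x; rewrite [in LHS](D x) !hadd !hsc; apply: quat_eq; rewrite /= -?/A0 -?/A1
      -?/A2 -?/A3 -?/B0 -?/B1 -?/B2 -?/B3 -?/C0 -?/C1 -?/C2 -?/C3 -?/E0 -?/E1 -?/E2 -?/E3; idtac; rewrite ?eA1 ?eA2 ?eA3 ?eB0 ?eB1 ?eB2 ?eB3 ?eC0 ?eC1 ?eC2 ?eC3 ?eE0 ?eE1 ?eE2 ?eE3; clearbody A0; ring.
  have hn := hiso e0; rewrite /qnorm key /= in hn.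
  have hA : `|A0| = 1.
    move: hn; rewrite !mulr0 !mulr1 !expr0n /= !addr0 expr1n sqrtr1 sqrtr_sqr.
    done.
  have hsq : A0 ^+ 2 = 1 by rewrite -(real_normK (num_real A0)) hA expr1n.
  have : (A0 - 1) * (A0 + 1) = 0.
    rewrite mulrDr !mulrBl mulr1 mul1r -expr2 hsq; ring.
  move/eqP; rewrite mulf_eq0 => /orP[] /eqP hA2.
  + left=> x; rewrite key; have -> : A0 = 1 by lra.
    by apply: quat_eq; rewrite /= mul1r.
  + right=> x; rewrite key; have -> : A0 = -1 by lra.
    by apply: quat_eq; rewrite /= mulN1r.
- case=> hp.
  + split; [|split].
    * by move=> x; apply: quat_eq; rewrite /=; ring.
    * by move=> x; rewrite hp; apply: quat_eq; rewrite /=; ring.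
    * by move=> x y; rewrite hp.
  + split; [|split].
    * by move=> x; apply: quat_eq; rewrite /=; ring.
    * by move=> x; rewrite hp; apply: quat_eq; rewrite /=; ring.
    * move=> x y; rewrite !hp.
      have -> : qadd (qmul (qopp y) (qconj x)) (qmul y (phi x)) = Quat 0 0 0 0.
        by apply: quat_eq; rewrite /=; ring.
      by apply: quat_eq; rewrite /= oppr0.
Qed.
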